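(* Let $A$ be a real symmetric $n\times n$ matrix and $Z=\{{\bf z}_1,\dots,{\bf z}_s\}\subset\mathbb{R}^n$. Then the extended walk matrix $\widetilde W(A,Z)$ has rank $n$ if and only if the real linear span of $P(A,Z)$ equals $\mathbb{R}^{n\times n}$.
   Context: The extended walk matrix is the $n\times (ns)$ matrix $\widetilde W(A,Z):=[{\bf z}_1, A{\bf z}_1,\dots,A^{n-1}{\bf z}_1,\dots,{\bf z}_s, A{\bf z}_s,\dots,A^{n-1}{\bf z}_s]$. The set $P(A,Z):=\{A^m{\bf z}_k{\bf z}_j^TA^\ell : 1\le k,j\le s,\ 0\le m,\ell\le n-1\}$. *)

(* Defs.v *)
From HB Require Import structures.
From mathcomp Require Import all_boot all_order all_algebra.
Set Implicit Arguments. Unset Strict Implicit. Unset Printing Implicit Defensive.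
Import Order.TTheory GRing.Theory Num.Theory.
Local Open Scope ring_scope.

(* Extended walk matrix  W~(A,Z) = [z_1, A z_1, ..., A^(n-1) z_1, ..., z_s, ..., A^(n-1) z_s],
   an n x (s*n) matrix.  Column (k, m) (k < s, m < n) sits at index k * n + m
   (= mxvec_index k m), i.e. exactly the ordering of the paper. *)
Definition ext_walk (R : pzRingType) (n s : nat) (A : 'M[R]_n) (Z : 'I_s -> 'cV[R]_n)
  : 'M[R]_(n, s * n) :=
  \matrix_(r < n) mxvec (\matrix_(k < s, m < n) (A ^+ m *m Z k) r 0).

Definition walk_products (R : pzRingType) (n s : nat) (A : 'M[R]_n) (Z : 'I_s -> 'cV[R]_n)
  : seq 'M[R]_n :=
  [seq A ^+ kjml.2.1 *m Z kjml.1.1 *m (Z kjml.1.2)^T *m A ^+ kjml.2.2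
    | kjml : 'I_s * 'I_s * ('I_n * 'I_n) <- enum [set: 'I_s * 'I_s * ('I_n * 'I_n)]].

(* Main.v *)
Require Import Defs.
From HB Require Import structures.
From mathcomp Require Import all_boot all_order all_algebra.
Import Order.TTheory GRing.Theory Num.Theory.
Local Open Scope ring_scope.

Lemma trmx_exp_sym (R : comPzRingType) (n : nat) (A : 'M[R]_n) (symA : A^T = A) (l : nat) :
  (A ^+ l)^T = A ^+ l.
Proof.
elim: l => [|l IH]; first by rewrite !expr0 trmx1.
by rewrite exprS -mulmxE trmx_mul IH symA mulmxE -exprSr exprS.
Qed.

Lemma col_ext_walk (R : comPzRingType) (n s : nat) (A : 'M[R]_n) (Z : 'I_s -> 'cV[R]_n)
   (k : 'I_s) (m : 'I_n) :
  col (mxvec_index k m) (ext_walk A Z) = A ^+ m *m Z k.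
Proof.
apply/matrixP => r i; rewrite (ord1 i) !mxE.
by rewrite mxvecE !mxE.
Qed.

Lemma col_in (R : comPzRingType) (n s : nat) (A : 'M[R]_n) (Z : 'I_s -> 'cV[R]_n)
  (symA : A^T = A) c d :
  col c (ext_walk A Z) *m (col d (ext_walk A Z))^T \in walk_products A Z.
Proof.
case: (mxvec_indexP c) => k m; case: (mxvec_indexP d) => j l.
apply/mapP; exists (k, j, (m, l)); first by rewrite mem_enum inE.
rewrite !col_ext_walk /= trmx_mul trmx_exp_sym //.
by rewrite !mulmxA.
Qed.

Lemma expand (R : comPzRingType) (n p : nat) (W : 'M[R]_(n, p)) (X : 'M[R]_p) :
  W *m X *m W^T = \sum_c \sum_d X c d *: (col c W *m (col d W)^T).
Proof.
apply/matrixP => i j; rewrite summxE.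
under eq_bigr => c _ do rewrite summxE.
under eq_bigr => c _ do under eq_bigr => d _ do rewrite !mxE big_ord1 !mxE.
rewrite ?mxE.
rewrite (eq_bigr (fun d => \sum_c W i c * X c d * W j d)); last first.
  by move=> d _; rewrite !mxE mulr_suml.
rewrite exchange_big /=; apply: eq_bigr => c _; apply: eq_bigr => d _.
by rewrite mulrCA mulrA.
Qed.

Lemma mul_col (R : pzSemiRingType) (m n p : nat) (K : 'M[R]_(m, n)) (W : 'M[R]_(n, p)) c :
  K *m col c W = col c (K *m W).
Proof. by apply/matrixP => i j; rewrite !mxE; apply: eq_bigr => k _; rewrite !mxE. Qed.

Theorem lemma3p4 (R : realFieldType) (n s : nat) (A : 'M[R]_n)
    (Z : 'I_s -> 'cV[R]_n) (symA : A^T = A) :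
  (\rank (ext_walk A Z) = n)%N <-> (<<walk_products A Z>>%VS = fullv).
Proof.
set W := ext_walk A Z.
split => [rkW | spanF].
- have : row_full W^T by rewrite /row_full mxrank_tr rkW.
  case/row_fullP => B HB.
  have HW : W *m B^T = 1%:M by have := congr1 trmx HB; rewrite trmx_mul trmxK trmx1.
  apply/eqP; rewrite eqEsubv subvf /=; apply/subvP => M _.
  set X := B^T *m M *m B.
  have -> : M = W *m X *m W^T.
    by rewrite /X !mulmxA HW mul1mx -!mulmxA HB mulmx1.
  have -> : W *m X *m W^T =
     \sum_c \sum_d X c d *: (col c W *m (col d W)^T).
    exact: expand.
  apply: memv_suml => c _; apply: memv_suml => d _.
  by apply: memvZ; apply: memv_span; apply: col_in.
- apply/eqP; rewrite eqn_leq rank_leq_row /=; rewrite leqNgt; apply/negP => ltW.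
  have : kermx W != 0.
    by rewrite -mxrank_eq0 mxrank_ker subn_eq0 -ltnNge.
  move=> /negP; apply.
  set K := kermx W.
  have yW : K *m W = 0 by rewrite /K mulmx_ker.
  have Hsub : (<<walk_products A Z>> <= lker (linfun (mulmx K)))%VS.
    apply/span_subvP => M /mapP [[[k j'] [m l]] _ ->].
    rewrite memv_ker lfunE /= -!col_ext_walk -/W.
    by rewrite !mulmxA mul_col yW col0 !mul0mx.
  have : (1%:M : 'M[R]_n) \in lker (linfun (mulmx K)).
    by apply: (subvP Hsub); rewrite spanF memvf.
  by rewrite memv_ker lfunE /= mulmx1.
Qed.
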